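(* Let $G$ be a graph, $O\subseteq V(G)$, $r$ and $m$ non-negative integers, and $\prec$ a linear ordering of $V(G)$. Let $O'$ be the set of all $(r,\prec,m,O)$-rich vertices of $G$. If the weak $r$-coloring number of $(G,\prec)$ is at most $b$, then $|O'|\le \frac{b}{m}|O|$.
   Context: For a linear ordering $\prec$ of $V(G)$ and a non-negative integer $r$, a vertex $u$ is weakly $(r,\prec)$-reachable from a vertex $v\succeq u$ if there is a path $P$ in $G$ from $v$ to $u$ of length at most $r$ such that all vertices of $V(P)\setminus\{u\}$ are greater than $u$ in $\prec$. $L_{r,\prec}(v)$ is the set of vertices weakly $(r,\prec)$-reachable from $v$, and $R_{r,\prec}(u)$ is the set of vertices $v$ from which $u$ is weakly $(r,\prec)$-reachable. The weak $r$-coloring number of $(G,\prec)$ is $\max_{v\in V(G)}|L_{r,\prec}(v)|$. For $O\subseteq V(G)$ and a non-negative integer $m$, a vertex $v$ is $(r,\prec,m,O)$-rich if $|R_{r,\prec}(v)\cap O|\ge m$. *)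

(* Defs.v *)
From mathcomp Require Import all_boot all_order all_algebra.
From mathcomp Require Import boolp.
Set Implicit Arguments. Unset Strict Implicit. Unset Printing Implicit Defensive.

Section WReach.
Variables (T : finType) (e : rel T) (prec : rel T).

Definition simple_graph := symmetric e /\ irreflexive e.

Definition strict_linear_order :=
  [/\ irreflexive prec, transitive prec & forall x y, x != y -> prec x y || prec y x].

Definition wreach (r : nat) (v u : T) : Prop :=
  exists p : seq T,
    [/\ path e v p, last v p = u, uniq (v :: p), size p <= r
      & all (fun w => (w == u) || prec u w) (v :: p)].

Definition Lset (r : nat) (v : T) : {set T} := [set u | `[< wreach r v u >]].
Definition Rset (r : nat) (u : T) : {set T} := [set v | `[< wreach r v u >]].

Definition wcol (r : nat) : nat := \max_(v : T) #|Lset r v|.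

Definition rich (r m : nat) (O : {set T}) (v : T) : bool := m <= #|Rset r v :&: O|.

End WReach.

(* Main.v *)
Require Import Defs.
From mathcomp Require Import all_boot all_order all_algebra.
From mathcomp Require Import boolp.
Import GRing.Theory Num.Theory.
Local Open Scope ring_scope.

Lemma card_cnt (T : finType) (A O : {set T}) :
  #|A :&: O| = (\sum_(v in O) (v \in A : nat))%N.
Proof.
rewrite -sum1_card big_mkcond [RHS]big_mkcond /=.
apply: eq_bigr => v _; rewrite in_setI; by case: (v \in A); case: (v \in O).
Qed.

Lemma nat_bound (T : finType) (e prec : rel T) (O : {set T}) (r m b : nat) :
  (wcol e prec r <= b)%N ->
  (m * #|[set v | rich e prec r m O v]| <= #|O| * b)%N.
Proof.
move=> hb.
set O' := [set v | _].
have h1 : (m * #|O'| <= \sum_(u in O') #|Rset e prec r u :&: O|)%N.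
  rewrite -sum1_card big_distrr /= muln1; apply: leq_sum => u.
  by rewrite inE.
apply: (leq_trans h1).
under eq_bigr => u _ do rewrite card_cnt.
rewrite exchange_big /= -sum_nat_const; apply: leq_sum => v vO.
apply: leq_trans (leq_trans _ (leq_bigmax_cond v (erefl true))) hb.
apply: (@leq_trans (\sum_u (v \in Rset e prec r u : nat))).
  rewrite [X in (X <= _)%N]big_mkcond /=; apply: leq_sum => u _.
  by case: (u \in O').
rewrite -sum1_card [X in (_ <= X)%N]big_mkcond /=; apply: eq_leq; apply: eq_bigr => u _.
by rewrite !inE; case: (`[< _ >]).
Qed.

Theorem mainTheorem3 (T : finType) (e prec : rel T) (O : {set T}) (r m b : nat) :
  simple_graph e -> strict_linear_order prec -> (0 < m)%N ->
  (wcol e prec r <= b)%N ->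
  (#|[set v | rich e prec r m O v]|%:R : rat) <= (b%:R / m%:R) * #|O|%:R.
Proof.
move=> _ _ m0 hb.
have h := @nat_bound T e prec O r m b hb.
have mp : (0 : rat) < m%:R by rewrite ltr0n.
rewrite mulrAC ler_pdivlMr // -!natrM ler_nat.
by rewrite mulnC (mulnC b).
Qed.
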